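(* Let $n\ge 1$, $m=2$, $0\le k\le n-1$. There is a learning algorithm that, given $n$ and $k$, exactly identifies every (complete or incomplete) acyclic $k$-bounded binary CP-net $N^*$ over $n$ variables using $O(n\mathcal{U}_k+e_{N^*}\log_2(n))$ membership queries over swap examples in $\overline{\mathcal{X}}_{swap}$, where $e_{N^*}$ is the number of edges of $N^*$.
   Context: Variables $V=\{v_1,\dots,v_n\}$, each with a domain of size $2$. An outcome assigns a value to every variable; $\mathcal{O}_X$ denotes assignments to $X\subseteq V$. A CP-net specifies for each $v_i$ a parent set $Pa(v_i)\subseteq V\setminus\{v_i\}$ and, for each context $\gamma\in\mathcal{O}_{Pa(v_i)}$, either a strict order $\succ^{v_i}_\gamma$ on $D_{v_i}$ or nothing (complete if always given, incomplete otherwise); parents are non-dummy. Acyclic: the graph with edges $(v_j,v_i)$, $v_j\in Pa(v_i)$, is acyclic; $k$-bounded: all $|Pa(v_i)|\le k$. Improving flip: changing only $v_i$ to a value preferred under $\succ^{v_i}_{o[Pa(v_i)]}$ (when given); $o'\succ o$ iff a nonempty sequence of improving flips leads from $o$ to $o'$. $\overline{\mathcal{X}}_{swap}$ is the set of all ordered pairs $x=(x.1,x.2)$ of outcomes differing in exactly one variable. A membership query for $x$ returns $1$ iff $x.1\succ x.2$ under the unknown target $N^*$, else $0$ (always correct). $\mathcal{U}_k$ is the smallest size of a set $S\subseteq\{0,1\}^{n-1}$ whose projection onto every set of $k$ coordinates contains all $2^k$ binary vectors. *)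

(* Defs.v *)
From mathcomp Require Import all_boot.
Set Implicit Arguments. Unset Strict Implicit. Unset Printing Implicit Defensive.

Definition outcome (n : nat) := {ffun 'I_n -> bool}.

(* A binary CP-net: parent sets, and for each variable a conditional
   preference table.  cpt i o = Some b means that, in the context
   o[Pa(i)], value b is strictly preferred to ~~ b for v_i; None means
   that no order is given for this context (incomplete CP-net).  *)
Record cpnet (n : nat) := CPNet {
  Pa  : 'I_n -> {set 'I_n};
  cpt : 'I_n -> outcome n -> option bool
}.

Definition cpnet_wf n (N : cpnet n) : Prop :=
  (forall i, i \notin Pa N i) /\
  (forall i (o o' : outcome n),
      (forall j, j \in Pa N i -> o j = o' j) -> cpt N i o = cpt N i o') /\
  (forall i j, j \in Pa N i ->
      exists (o o' : outcome n),
        (forall l, l != j -> o l = o' l) /\ cpt N i o <> cpt N i o').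

Definition dep_edge n (N : cpnet n) : rel 'I_n := fun j i => j \in Pa N i.

Definition acyclic n (N : cpnet n) : Prop :=
  forall i, ~~ [exists j, dep_edge N i j && connect (dep_edge N) j i].

Definition k_bounded n (k : nat) (N : cpnet n) : Prop :=
  forall i, #|Pa N i| <= k.

Definition num_edges n (N : cpnet n) : nat := \sum_(i < n) #|Pa N i|.

Definition flip n (N : cpnet n) : rel (outcome n) := fun o o' =>
  [exists i, [forall j, (j != i) ==> (o j == o' j)]
             && (o i != o' i) && (cpt N i o == Some (o' i))].

Definition pref n (N : cpnet n) (a b : outcome n) : bool :=
  [exists c, flip N b c && connect (flip N) c a].

Definition swapb n (x : outcome n * outcome n) : bool :=
  #|[set i | x.1 i != x.2 i]| == 1.
Definition swap_ex (n : nat) := {x : outcome n * outcome n | swapb x}.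

Definition MQ n (N : cpnet n) (x : swap_ex n) : bool :=
  pref N (val x).1 (val x).2.

(* A query-learning algorithm over n variables, modelled as an adaptive
   decision tree: either output a hypothesis CP-net, or ask a membership
   query on a swap example and continue depending on the answer. *)
Inductive qalg (n : nat) : Type :=
| Output : cpnet n -> qalg n
| Ask : swap_ex n -> (bool -> qalg n) -> qalg n.

Fixpoint run n (A : qalg n) (N : cpnet n) : cpnet n :=
  match A with
  | Output H => H
  | Ask x k => run (k (MQ N x)) N
  end.

Fixpoint num_queries n (A : qalg n) (N : cpnet n) : nat :=
  match A with
  | Output _ => 0
  | Ask x k => (num_queries (k (MQ N x)) N).+1
  end.

Definition same_cpnet n (H N : cpnet n) : Prop :=
  (forall i, Pa H i = Pa N i) /\ (forall i o, cpt H i o = cpt N i o).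

Definition k_universal (m k : nat) (S : {set {ffun 'I_m -> bool}}) : bool :=
  [forall K : {set 'I_m}, (#|K| == k) ==>
     [forall v : {ffun 'I_m -> bool},
        [exists s in S, [forall j in K, s j == v j]]]].

(* U_k : smallest size of a k-universal S \subseteq {0,1}^(n-1)
   (for k <= n-1 the full set is k-universal, so the default 2^(n-1) is
   an upper bound that is never strictly needed) *)
Definition U_k (n k : nat) : nat :=
  \big[minn/2 ^ (n - 1)]_(S : {set {ffun 'I_(n - 1) -> bool}} | k_universal k S) #|S|.

(* Main.v *)
Require Import Defs.
From mathcomp Require Import all_boot zify.
Set Implicit Arguments. Unset Strict Implicit. Unset Printing Implicit Defensive.
Inductive QM (n : nat) (A : Type) : Type :=
| Ret : A -> QM n A
| Qry : swap_ex n -> (bool -> QM n A) -> QM n A.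
Arguments Ret {n A}.

Fixpoint bindQ n A B (m : QM n A) (f : A -> QM n B) : QM n B :=
  match m with Ret a => f a | Qry x k => Qry x (fun b => bindQ (k b) f) end.
Fixpoint evalQ n A (m : QM n A) (N : cpnet n) : A :=
  match m with Ret a => a | Qry x k => evalQ (k (MQ N x)) N end.
Fixpoint cntQ n A (m : QM n A) (N : cpnet n) : nat :=
  match m with Ret _ => 0 | Qry x k => (cntQ (k (MQ N x)) N).+1 end.
Fixpoint toAlg n (m : QM n (cpnet n)) : qalg n :=
  match m with Ret a => Output a | Qry x k => Ask x (fun b => toAlg (k b)) end.

Lemma evalQ_bind n A B (m : QM n A) (f : A -> QM n B) N :
  evalQ (bindQ m f) N = evalQ (f (evalQ m N)) N.
Proof. by elim: m => //= x k IH; rewrite IH. Qed.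
Lemma cntQ_bind n A B (m : QM n A) (f : A -> QM n B) N :
  cntQ (bindQ m f) N = cntQ m N + cntQ (f (evalQ m N)) N.
Proof. by elim: m => //= x k IH; rewrite IH. Qed.
Lemma run_toAlg n (m : QM n (cpnet n)) N : run (toAlg m) N = evalQ m N.
Proof. by elim: m => //= x k IH. Qed.
Lemma nq_toAlg n (m : QM n (cpnet n)) N : num_queries (toAlg m) N = cntQ m N.
Proof. by elim: m => //= x k IH; rewrite IH. Qed.

Fixpoint mapM n A T (g : T -> QM n A) (l : seq T) : QM n (seq A) :=
  match l with
  | [::] => Ret [::]
  | x :: l' => bindQ (g x) (fun a => bindQ (mapM g l') (fun r => Ret (a :: r)))
  end.

Lemma evalQ_mapM n A T (g : T -> QM n A) l N :
  evalQ (mapM g l) N = map (fun x => evalQ (g x) N) l.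
Proof. by elim: l => //= x l IH; rewrite !evalQ_bind IH. Qed.
Lemma cntQ_mapM n A T (g : T -> QM n A) l N :
  cntQ (mapM g l) N = sumn (map (fun x => cntQ (g x) N) l).
Proof.
elim: l => //= x l IH; rewrite !cntQ_bind IH /=.
by rewrite addn0.
Qed.

Definition upd n (o : outcome n) (i : 'I_n) (b : bool) : outcome n :=
  [ffun j => if j == i then b else o j].

Lemma swapb_upd n (o : outcome n) i b : swapb (upd o i b, upd o i (~~ b)).
Proof.
rewrite /swapb /=; rewrite (_ : [set j | _] = [set i]) ?cards1 //.
apply/setP => j; rewrite !inE !ffunE; case: (j == i); [by case: b|by rewrite eqxx].
Qed.

Definition sx n (o : outcome n) i b : swap_ex n :=
  exist _ (upd o i b, upd o i (~~ b)) (swapb_upd o i b).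

Definition askf n (i : 'I_n) (o : outcome n) : QM n (option bool) :=
  Qry (sx o i true) (fun b1 => Qry (sx o i false) (fun b2 =>
    Ret (if b1 then Some true else if b2 then Some false else None))).

Lemma cntQ_askf n (i : 'I_n) o N : cntQ (askf i o) N = 2.
Proof. by []. Qed.

Definition flipL n (a : outcome n) (D : seq 'I_n) : outcome n :=
  [ffun j => if j \in D then ~~ a j else a j].

Fixpoint search n (i : 'I_n) (fuel : nat) (fa : option bool) (a : outcome n)
    (D : seq 'I_n) : QM n 'I_n :=
  if size D <= 1 then Ret (head i D) else
  match fuel with
  | 0 => Ret (head i D)
  | f.+1 =>
    let h := (size D %/ 2) in
    let mid := flipL a (take h D) in
    bindQ (askf i mid) (fun v =>
      if v == fa then search i f fa mid (drop h D)
      else search i f fa a (take h D))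
  end.

Lemma cntQ_search n (i : 'I_n) fuel fa a D N :
  cntQ (search i fuel fa a D) N <= 2 * fuel.
Proof.
elim: fuel a D => [|f IH] a D /=; first by case: ifP.
case: ifP => // _ /=; rewrite mulnS add2n !ltnS; case: ifP => _; exact: IH.
Qed.

Definition agree n (o o' : outcome n) (P : {set 'I_n}) :=
  [forall u in P, o u == o' u].

Definition emb n (i : 'I_n) (s : {ffun 'I_(n - 1) -> bool}) : outcome n :=
  [ffun j => if unlift i j is Some c then s (cast_ord (esym (subn1 n)) c)
             else false].

Definition Pair n := ({ffun 'I_(n - 1) -> bool} * {ffun 'I_(n - 1) -> bool})%type.

Fixpoint loop n (i : 'I_n) (S : {set {ffun 'I_(n - 1) -> bool}})
   (F : {ffun 'I_(n - 1) -> bool} -> option bool) (t : nat)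
   (fuel : nat) (P : {set 'I_n}) : QM n {set 'I_n} :=
  match [pick p : Pair n | [&& p.1 \in S, p.2 \in S,
                agree (emb i p.1) (emb i p.2) P & F p.1 != F p.2]] with
  | None => Ret P
  | Some p =>
    match fuel with
    | 0 => Ret P
    | f.+1 => bindQ (search i t (F p.1) (emb i p.1)
                (enum [set j | emb i p.1 j != emb i p.2 j]))
                (fun j => loop i S F t f (j |: P))
    end
  end.

Definition learn_var n (S : {set {ffun 'I_(n - 1) -> bool}}) (t k : nat)
    (i : 'I_n) : QM n ({set 'I_n} * (outcome n -> option bool)) :=
  bindQ (mapM (fun s => askf i (emb i s)) (enum S)) (fun tab =>
  let F := fun s => nth None tab (index s (enum S)) in
  bindQ (loop i S F t k set0) (fun P =>
  Ret (P, fun o => if [pick s in S | agree (emb i s) o P] is Some s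
                   then F s else None))).

Definition dflt n : {set 'I_n} * (outcome n -> option bool) := (set0, fun _ => None).

Definition prog n (S : {set {ffun 'I_(n - 1) -> bool}}) (t k : nat) : QM n (cpnet n) :=
  bindQ (mapM (learn_var S t k) (enum 'I_n)) (fun res =>
  Ret (CPNet (fun i => (nth (dflt n) res (index i (enum 'I_n))).1)
             (fun i => (nth (dflt n) res (index i (enum 'I_n))).2))).
Lemma grow (T : finType) (A : {set T}) k : #|A| <= k <= #|T| ->
  exists2 K : {set T}, A \subset K & #|K| == k.
Proof.
move=> /andP[h1 h2]; move Hd: (k - #|A|) => d.
elim: d A h1 Hd => [|d IH] A h1 Hd.
  by exists A => //; apply/eqP; lia.
have [x xA] : exists x, x \notin A.
  apply/existsP; rewrite -negb_forall; apply/negP => /forallP H.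
  have : #|[set: T]| <= #|A| by apply: subset_leq_card; apply/subsetP => y _; exact: H.
  rewrite cardsT; lia.
have Hc : #|x |: A| = #|A|.+1 by rewrite cardsU1 xA.
case: (IH (x |: A)); [lia|lia|] => K H1 H2.
by exists K => //; apply: subset_trans H1; exact: subsetUr.
Qed.

Section MQ.
Variables (n : nat) (N : cpnet n).

Lemma flipE x z : flip N x z -> exists j,
  (forall l, l != j -> x l = z l) /\ x j != z j /\ cpt N j x = Some (z j).
Proof.
case/existsP => j /andP[/andP[/forallP H1 H2] /eqP H3].
exists j; split => // l lj; exact/eqP/(implyP (H1 l)).
Qed.

Lemma flip_v x z v : flip N x z -> x v != z v -> cpt N v x = Some (z v).
Proof.
case/flipE => j [H1 [H2 H3]] Hv.
case: (eqVneq v j) => [->//|/H1 E]; by rewrite E eqxx in Hv.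
Qed.

Lemma stay v x s : path (flip N) x s ->
  (forall y, y \in x :: s -> cpt N v y != Some (~~ x v)) ->
  forall y, y \in s -> y v = x v.
Proof.
elim: s x => [//|z s IH] x /= /andP[Hxz Hp] Hc.
have Ez : z v = x v.
  apply/eqP; apply/negPn/negP => Hne.
  have E : cpt N v x = Some (z v) by apply: flip_v Hxz _; rewrite eq_sym.
  move: (Hc x (mem_head _ _)); rewrite E.
  by case: (z v) (x v) Hne => [] [].
move=> y; rewrite inE => /orP[/eqP -> //|Hy].
rewrite (IH z Hp) //.
move=> w Hw; rewrite Ez; apply: Hc.
by rewrite inE Hw orbT.
Qed.

Lemma change v c x s : path (flip N) x s ->
  (forall y, y \in x :: s -> cpt N v y = c) ->
  (exists2 y, y \in s & y v != x v) ->
  c = Some (~~ x v) /\ last x s v = ~~ x v.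
Proof.
elim: s x => [|z s IH] x /=; first by move=> _ _ [].
case/andP=> Hxz Hp Hc [y Hy Hyv].
case: (eqVneq (z v) (x v)) => Ez.
  have Hy' : y \in s.
    move: Hy; rewrite inE => /orP[/eqP E|//].
    by rewrite E Ez eqxx in Hyv.
  have [] := IH z Hp _ _.
  - by move=> w Hw; apply: Hc; rewrite inE Hw orbT.
  - by exists y => //; rewrite Ez.
  by rewrite Ez.
have Hzv : z v = ~~ x v by case: (z v) (x v) Ez => [] [].
have Hcx : c = Some (~~ x v).
  by rewrite -(Hc x (mem_head _ _)) -Hzv; apply: flip_v Hxz _; rewrite eq_sym Ez.
split => //.
case: (last z s =P z) => [->//|Hne].
have: last z s \in z :: s by apply: mem_last.
rewrite inE => /orP[/eqP E|Hl]; first by rewrite E.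
rewrite (stay Hp) //.
move=> w Hw; rewrite (Hc w); last by rewrite inE Hw orbT.
by rewrite Hcx Hzv negbK; case: (x v).
Qed.

Hypothesis wf : cpnet_wf N.
Hypothesis acy : acyclic N.

Lemma pref_swap (a b : outcome n) i :
  (forall l, l != i -> a l = b l) -> a i != b i ->
  pref N a b = (cpt N i b == Some (a i)).
Proof.
move=> Hab Hi.
apply/idP/idP; last first.
  move/eqP=> Hc; apply/existsP; exists a; rewrite connect0 andbT.
  apply/existsP; exists i; rewrite Hc eqxx andbT eq_sym Hi andbT.
  apply/forallP => j; apply/implyP => /Hab ->; exact: eqxx.
case/existsP => c /andP[Hbc /connectP[p Hp Ha]].
set s := c :: p.
have Hps : path (flip N) b s by rewrite /= Hbc Hp.
have Has : a \in s by rewrite Ha /s; apply: mem_last.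
pose F := [set j | has (fun y : outcome n => y j != b j) s].
have iF : i \in F by rewrite inE; apply/hasP; exists a.
pose anc (v : 'I_n) := [set j | connect (dep_edge N) j v].
case: (@arg_minnP _ i (mem F) (fun v => #|anc v|) iF) => v vF vmin.
have noPa : forall u, u \in Pa N v -> u \notin F.
  move=> u uv; apply/negP => uF.
  have := vmin u uF; apply/negP; rewrite -ltnNge.
  apply: proper_card; apply/properP; split.
    apply/subsetP => j; rewrite !inE => Hj.
    apply: connect_trans Hj _; exact: connect1.
  exists v; first by rewrite inE connect0.
  rewrite inE; apply/negP => Hvu.
  have := acy u; move/negP; apply; apply/existsP; exists v.
  by rewrite /dep_edge uv.
have Hctx : forall y, y \in b :: s -> cpt N v y = cpt N v b.
  move=> y Hy; case: wf => _ [W2 _]; apply: W2 => u /noPa.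
  rewrite inE => /hasPn Hu.
  move: Hy; rewrite inE => /orP[/eqP -> //|/Hu]; by rewrite negbK => /eqP.
have Hex : exists2 y, y \in s & y v != b v.
  have H : v \in F := vF; rewrite inE in H. case: (hasP H) => y Hy Hyv; by exists y.
case: (change Hps Hctx Hex) => Hcv Hlast.
have Eav : a v = ~~ b v by rewrite Ha.
have vi : v = i.
  apply/eqP; apply/negPn/negP => /Hab E.
  by move: Eav; rewrite E; case: (b v).
subst v; rewrite Hcv Eav.
done.
Qed.

Lemma cpt_upd (o : outcome n) i b : cpt N i (upd o i b) = cpt N i o.
Proof.
case: wf => W1 [W2 _]; apply: W2 => j jP; rewrite ffunE.
case: eqP => // E; by rewrite E (negbTE (W1 i)) in jP.
Qed.

Lemma MQ_sx (o : outcome n) i b : MQ N (sx o i b) = (cpt N i o == Some b).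
Proof.
rewrite /MQ /= (@pref_swap _ _ i).
- by rewrite cpt_upd ffunE eqxx.
- by move=> l /negbTE li; rewrite !ffunE li.
- by rewrite !ffunE eqxx; case: b.
Qed.

Lemma askf_eval i (o : outcome n) : evalQ (askf i o) N = cpt N i o.
Proof.
rewrite /= !MQ_sx; by case: (cpt N i o) => [[]|].
Qed.

Lemma flipL1 (a : outcome n) j : forall l, l != j -> a l = flipL a [:: j] l.
Proof. by move=> l lj; rewrite ffunE inE (negbTE lj). Qed.

Lemma notPa i (a : outcome n) j : j \notin Pa N i -> cpt N i (flipL a [:: j]) = cpt N i a.
Proof.
move=> jn; case: wf => _ [W2 _]; apply: W2 => u uP; rewrite -flipL1 //.
by apply: contraNneq jn => <-.
Qed.

Lemma search_step i f fa (a : outcome n) D : search i f.+1 fa a D =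
  if size D <= 1 then Ret (head i D) else
    let h := (size D %/ 2) in
    let mid := flipL a (take h D) in
    bindQ (askf i mid) (fun v =>
      if v == fa then search i f fa mid (drop h D)
      else search i f fa a (take h D)).
Proof. by []. Qed.

Lemma search_ok i fuel fa (a : outcome n) D :
  uniq D -> 0 < size D <= 2 ^ fuel -> cpt N i a = fa ->
  cpt N i (flipL a D) != fa ->
  let j := evalQ (search i fuel fa a D) N in j \in D /\ j \in Pa N i.
Proof.
elim: fuel fa a D => [|f IH] fa a D uD /andP[D0 Df] Ha Hb.
  rewrite (_ : search i 0 fa a D = Ret (head i D)); last by rewrite /=; case: ifP.
  case: D uD D0 Df Hb => [//|j [|//]] _ _ _ Hb /=; rewrite inE eqxx; split => //.
  apply/negPn/negP => /(notPa a); rewrite Ha => E; by rewrite E eqxx in Hb.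
rewrite search_step; case: ifP => Hs.
  case: D uD D0 Df Hb Hs => [//|j [|//]] _ _ _ Hb _ /=; rewrite inE eqxx; split => //.
  apply/negPn/negP => /(notPa a); rewrite Ha => E; by rewrite E eqxx in Hb.
rewrite evalQ_bind askf_eval.
set h := (size D %/ 2).
have uD' := uD; rewrite -(cat_take_drop h D) cat_uniq in uD'.
case/and3P: uD' => ut /hasPn dis ud.
have Hs' : 1 < size D by rewrite ltnNge Hs.
have Ht : size (take h D) = h by rewrite size_take; case: ifP => //; lia.
case: eqP => Hm.
  have [] := IH fa (flipL a (take h D)) (drop h D) ud _ Hm.
  - by rewrite size_drop; move: Df; rewrite expnS => Df; apply/andP; split; lia.
  - rewrite (_ : flipL _ _ = flipL a D) //; apply/ffunP => l; rewrite !ffunE.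
    have -> : (l \in D) = (l \in take h D) || (l \in drop h D).
      by rewrite -mem_cat cat_take_drop.
    case: (boolP (l \in drop h D)) => ld.
      by rewrite (negbTE (dis l ld)).
    by rewrite orbF.
  by move=> H1 H2; split => //; apply: mem_drop H1.
have [] := IH fa a (take h D) ut _ Ha.
- by rewrite Ht; move: Df; rewrite expnS => Df; apply/andP; split; lia.
- by apply/eqP.
by move=> H1 H2; split => //; apply: mem_take H1.
Qed.

Lemma flipL_diff (a b : outcome n) : flipL a (enum [set j | a j != b j]) = b.
Proof. apply/ffunP => l; rewrite ffunE mem_enum inE; by case: (a l) (b l) => [] []. Qed.

Section Loop.
Variables (i : 'I_n) (S : {set {ffun 'I_(n - 1) -> bool}})
  (F : {ffun 'I_(n - 1) -> bool} -> option bool) (t : nat).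
Hypothesis HF : forall s, s \in S -> F s = cpt N i (emb i s).
Hypothesis Hcov : forall o : outcome n,
  exists2 s, s \in S & forall u, u \in Pa N i -> emb i s u = o u.
Hypothesis Ht : n <= 2 ^ t.

Lemma loop_eq fuel (P : {set 'I_n}) : loop i S F t fuel P =
  match [pick p : Pair n | [&& p.1 \in S, p.2 \in S,
                agree (emb i p.1) (emb i p.2) P & F p.1 != F p.2]] with
  | None => Ret P
  | Some p =>
    match fuel with
    | 0 => Ret P
    | f.+1 => bindQ (search i t (F p.1) (emb i p.1)
                (enum [set j | emb i p.1 j != emb i p.2 j]))
                (fun j => loop i S F t f (j |: P))
    end
  end.
Proof. by case: fuel. Qed.

Lemma loop_ok fuel (P : {set 'I_n}) : P \subset Pa N i -> #|Pa N i| <= #|P| + fuel ->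
  evalQ (loop i S F t fuel P) N = Pa N i /\
  cntQ (loop i S F t fuel P) N <= 2 * t * (#|Pa N i| - #|P|).
Proof.
case: wf => W1 [W2 W3].
elim: fuel P => [|f IH] P HP Hc; rewrite loop_eq;
  case: pickP => [[s s'] /= /and4P[sS sS' Hag Hne]|Hnone].
- have E : P = Pa N i by apply/eqP; rewrite eqEcard HP; lia.
  by rewrite /= E.
- have E : P = Pa N i.
    apply/eqP; rewrite eqEsubset HP /=.
    apply/subsetP => j jPa; apply/negPn/negP => jP.
    case: (W3 _ _ jPa) => o [o' [Hoo Hne]].
    case: (Hcov o) => s sS Hs; case: (Hcov o') => s' sS' Hs'.
    have Hag : agree (emb i s) (emb i s') P.
      apply/forallP => u; apply/implyP => uP.
      have uPa := subsetP HP u uP.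
      rewrite Hs // Hs' // Hoo //.
      by apply/eqP => E; move: jP; rewrite -E uP.
    have HFne : F s != F s'.
      rewrite !HF // (W2 _ (emb i s) o) // (W2 _ (emb i s') o') //.
      exact/eqP.
    by have := Hnone (s, s'); rewrite /= sS sS' Hag HFne.
  by rewrite /= E.
- rewrite evalQ_bind cntQ_bind.
  set a := emb i s; set D := enum _.
  have Hfl : flipL a D = emb i s'.
    exact: flipL_diff.
  have uD : uniq D by apply: enum_uniq.
  have HsD : 0 < size D <= 2 ^ t.
    rewrite /D -cardE; apply/andP; split.
      rewrite lt0n; apply/negP => /eqP/cards0_eq E0.
      move/eqP: Hne; apply; rewrite !HF //; congr (cpt N i _).
      apply/ffunP => l; have := in_set0 l; rewrite -E0 inE.
      by move/negbT; rewrite negbK => /eqP.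
    by apply: leq_trans (max_card _) _; rewrite card_ord.
  have Hb : cpt N i (flipL a D) != F s by rewrite Hfl -HF // eq_sym.
  have [jD jPa] := search_ok uD HsD (esym (HF sS)) Hb.
  move: jD jPa; set j := evalQ _ N => jD jPa; clearbody j.
  have jP : j \notin P.
    apply/negP => jP; move: jD; rewrite mem_enum inE.
    by move/forallP: Hag => /(_ j); rewrite jP /= => ->.
  have HP' : j |: P \subset Pa N i by rewrite subUset sub1set jPa HP.
  have Hcard : #|j |: P| = #|P|.+1 by rewrite cardsU1 jP.
  have [E1 E2] : evalQ (loop i S F t f (j |: P)) N = Pa N i /\ cntQ (loop i S F t f (j |: P)) N <= 2 * t * (#|Pa N i| - #|j |: P|).
    by apply: IH => //; rewrite Hcard addSnnS.
  split => //.
  have Hlt : #|P|.+1 <= #|Pa N i| by rewrite -Hcard; exact: subset_leq_card HP'.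
  have -> : #|Pa N i| - #|P| = (#|Pa N i| - #|j |: P|).+1 by rewrite Hcard subnSK.
  rewrite mulnS; apply: leq_add => //.
  exact: cntQ_search.
- have E : P = Pa N i.
    apply/eqP; rewrite eqEsubset HP /=.
    apply/subsetP => j jPa; apply/negPn/negP => jP.
    case: (W3 _ _ jPa) => o [o' [Hoo Hne]].
    case: (Hcov o) => s sS Hs; case: (Hcov o') => s' sS' Hs'.
    have Hag : agree (emb i s) (emb i s') P.
      apply/forallP => u; apply/implyP => uP.
      have uPa := subsetP HP u uP.
      rewrite Hs // Hs' // Hoo //.
      by apply/eqP => E; move: jP; rewrite -E uP.
    have HFne : F s != F s'.
      rewrite !HF // (W2 _ (emb i s) o) // (W2 _ (emb i s') o') //.
      exact/eqP.
    by have := Hnone (s, s'); rewrite /= sS sS' Hag HFne.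
  by rewrite /= E.
Qed.
End Loop.

Section Cover.
Variables (i : 'I_n) (k : nat) (S : {set {ffun 'I_(n - 1) -> bool}}).
Hypotheses (HS : k_universal k S) (Hk : #|Pa N i| <= k) (Hkn : k <= n - 1).

Lemma cover (o : outcome n) :
  exists2 s, s \in S & forall u, u \in Pa N i -> emb i s u = o u.
Proof.
pose g (c : 'I_(n - 1)) : 'I_n := lift i (cast_ord (subn1 n) c).
have ginj : injective g by move=> c1 c2 /lift_inj/cast_ord_inj.
pose K0 := [set c | g c \in Pa N i].
have HK0 : #|K0| <= k.
  rewrite -(card_imset _ ginj); apply: leq_trans Hk; apply: subset_leq_card.
  by apply/subsetP => u /imsetP[c]; rewrite inE => cP ->.
case: (@grow _ K0 k); first by rewrite HK0 card_ord.
move=> K HK HKc.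
move/forallP: HS => /(_ K) /implyP /(_ HKc).
move/forallP => /(_ [ffun c => o (g c)]) /existsP [s /andP[sS /forallP Hs]].
exists s => // u uP.
have ui : i != u.
  by apply: contraTneq uP => <-; case: wf => W1 _; exact: W1.
case: (unlift_some ui) => c0 Eu Hun.
set c := cast_ord (esym (subn1 n)) c0.
have Hgc : g c = u by rewrite /g /c cast_ordKV.
have cK : c \in K by apply: (subsetP HK); rewrite inE Hgc.
move: (implyP (Hs c) cK) => /eqP; rewrite ffunE Hgc => <-.
by rewrite ffunE Hun.
Qed.

Lemma sumn_const (T : Type) c (l : seq T) : sumn (map (fun _ => c) l) = c * size l.
Proof. by elim: l => [|x l /= ->]; rewrite ?muln0 ?mulnS. Qed.

Lemma learn_ok t : n <= 2 ^ t ->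
  let r := evalQ (learn_var S t k i) N in
  r.1 = Pa N i /\ (forall o, r.2 o = cpt N i o) /\
  cntQ (learn_var S t k i) N <= 2 * #|S| + 2 * t * #|Pa N i|.
Proof.
move=> Ht.
rewrite /learn_var evalQ_bind cntQ_bind evalQ_mapM cntQ_mapM.
set tab := map _ (enum S).
set F := fun s => nth None tab (index s (enum S)).
have HF : forall s, s \in S -> F s = cpt N i (emb i s).
  move=> s sS; rewrite /F /tab (nth_map s) ?index_mem ?mem_enum //.
  by rewrite nth_index ?mem_enum // askf_eval.
have [E1 E2] := loop_ok HF cover Ht (sub0set _) (leq_trans Hk (leq_addl _ _)).
rewrite evalQ_bind cntQ_bind E1 /=; split => //; split.
  move=> o; case: pickP => [s /andP[sS /forallP Hag]|Hn].
    transitivity (F s); first by []. rewrite (HF s sS); case: wf => _ [W2 _]; apply: W2 => u uP.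
    by apply/eqP; move: (Hag u); rewrite uP.
  case: (cover o) => s sS Hs; have := Hn s; rewrite sS /=.
  by move/negbT/negP; case; apply/forallP => u; apply/implyP => uP; rewrite Hs.
rewrite cards0 subn0 in E2; rewrite addn0.
have -> : map (fun x => cntQ (askf i (emb i x)) N) (enum S) = map (fun _ => 2) (enum S).
  by apply: eq_map.
by rewrite sumn_const -cardE; apply: leq_add.
Qed.
End Cover.
End MQ.

Lemma exS n k : exists S : {set {ffun 'I_(n - 1) -> bool}},
  k_universal k S && (#|S| <= U_k n k).
Proof.
rewrite /U_k; apply: (big_ind (fun x => exists S : {set {ffun 'I_(n - 1) -> bool}},
   k_universal k S && (#|S| <= x))).
- exists setT; rewrite cardsT card_ffun card_bool card_ord leqnn andbT.
  apply/forallP => K; apply/implyP => _; apply/forallP => v; apply/existsP.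
  exists v; rewrite inE /=; apply/forallP => j; apply/implyP => _; exact: eqxx.
- move=> x y [S1 /andP[h1 h2]] [S2 /andP[h3 h4]]; rewrite /minn; case: ifP => _.
    by exists S1; rewrite h1.
  by exists S2; rewrite h3.
- by move=> S HS; exists S; rewrite HS leqnn.
Qed.

Definition Ssel n k : {set {ffun 'I_(n - 1) -> bool}} :=
  odflt setT [pick S : {set {ffun 'I_(n - 1) -> bool}} | k_universal k S && (#|S| <= U_k n k)].

Lemma SselP n k : k_universal k (Ssel n k) /\ #|Ssel n k| <= U_k n k.
Proof.
rewrite /Ssel; case: pickP => [S /andP[h1 h2] //|Hn].
case: (exS n k) => S HS; by rewrite Hn in HS.
Qed.

Lemma sumn_le (T : Type) (f g : T -> nat) l : (forall x, f x <= g x) ->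
  sumn (map f l) <= sumn (map g l).
Proof. by move=> H; elim: l => //= x l IH; apply: leq_add. Qed.

Lemma sumn_add (T : Type) (f g : T -> nat) l :
  sumn (map (fun x => f x + g x) l) = sumn (map f l) + sumn (map g l).
Proof. by elim: l => //= x l ->; lia. Qed.

Lemma sumn_mul (T : Type) c (f : T -> nat) l :
  sumn (map (fun x => c * f x) l) = c * sumn (map f l).
Proof. by elim: l => //= [|x l ->]; rewrite ?muln0 ?mulnDr. Qed.

Theorem theorem9 :
  exists (C : nat) (A : forall n k : nat, qalg n),
    forall (n k : nat), 1 <= n -> k <= n - 1 ->
    forall N : cpnet n, cpnet_wf N -> acyclic N -> k_bounded k N ->
      same_cpnet (run (A n k) N) N /\
      num_queries (A n k) N <= C * (n * U_k n k + num_edges N * trunc_log 2 n).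
Proof.
exists 4, (fun n k => toAlg (prog (Ssel n k) (trunc_log 2 n).+1 k)).
move=> n k n1 kn N wf acy kb.
case: (SselP n k) => HSu HSc.
set S := Ssel n k in HSu HSc *.
set T := trunc_log 2 n.
have Hlt : n < 2 ^ T.+1 by apply: trunc_log_ltn.
have Ht : n <= 2 ^ T.+1 by apply: ltnW.
have L := fun i => learn_ok wf acy HSu (kb i) kn Ht.
rewrite run_toAlg nq_toAlg /prog evalQ_bind cntQ_bind evalQ_mapM cntQ_mapM /=.
split.
  split => i /=; rewrite (nth_map i) ?index_mem ?mem_enum // nth_index ?mem_enum //;
  by case: (L i) => [H1 [H2 _]].
rewrite addn0.
apply: leq_trans (sumn_le (g := fun i => 2 * #|S| + 2 * T.+1 * #|Pa N i|) _ _) _.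
  by move=> i; case: (L i) => [_ [_ H3]].
rewrite sumn_add (sumn_mul (2 * T.+1)) sumn_const size_enum_ord.
have He : num_edges N = sumn (map (fun i => #|Pa N i|) (enum 'I_n)).
  by rewrite /num_edges sumnE big_map big_enum.
rewrite -He.
have Hek : num_edges N <= k * n.
  rewrite He; apply: leq_trans (sumn_le (g := fun _ => k) _ _) _; first exact: kb.
  by rewrite sumn_const size_enum_ord.
clear L; case: T Hlt Ht => [|T'] Hlt Ht.
  have n1' : n = 1 by rewrite expn1 in Hlt; lia.
  subst n; have k0 : k = 0 by lia.
  subst k; rewrite mul0n leqn0 in Hek; rewrite (eqP Hek); lia.
set e := num_edges N.
have h1 : 2 * #|S| * n <= 4 * (n * U_k n k) by nia.
have h2 : 2 * T'.+2 * e <= 4 * (e * T'.+1) by nia.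
by rewrite mulnDr; apply: leq_add.
Qed.
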